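(* Let $\psi$ be a pure state with Hamiltonian $H$ having period $\tau>0$, i.e. $\tau=\inf\{t>0:|\langle\psi|e^{-iHt}|\psi\rangle|=1\}$, with energy reference chosen so that $e^{-iH\tau}|\psi\rangle=|\psi\rangle$. Let $p_\psi(n)=\frac1{2\pi}\int_0^{2\pi}e^{i\theta n}\langle\psi|e^{-iH\tau\theta/2\pi}|\psi\rangle d\theta$, $n\in\mathbb Z$ (the probability that $\psi$ has energy $2\pi n/\tau$), and assume $H$ is bounded below. Then there exists a finite integer $L\ge1$ such that the $L$-fold convolution $p_{\psi^{\otimes L}}=p_\psi*\cdots*p_\psi$ satisfies $$\tfrac12\sum_{n\in\mathbb Z}|p_{\psi^{\otimes L}}(n)-p_{\psi^{\otimes L}}(n+1)|<1.$$
   Context: The distribution $p_{\psi^{\otimes L}}$ is the energy distribution of $\psi^{\otimes L}$ with respect to the non-interacting total Hamiltonian $\sum_{i=1}^L I^{\otimes(i-1)}\otimes H\otimes I^{\otimes(L-i)}$ (in units of $2\pi/\tau$). *)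

(* Defs.v *)
From Stdlib Require Import Reals ZArith List.
Open Scope R_scope.

Definition Zseries (f : Z -> R) (S : R) : Prop :=
  exists S1 S2 : R,
    infinite_sum (fun k : nat => f (Z.of_nat k)) S1 /\
    infinite_sum (fun k : nat => f (- Z.of_nat k - 1)%Z) S2 /\
    S = S1 + S2.

(** Finite sum over the integer interval [a, b] (empty if b < a). *)
Definition Zsum (a b : Z) (f : Z -> R) : R :=
  fold_right Rplus 0
    (map (fun j : nat => f (a + Z.of_nat j)%Z) (seq 0 (Z.to_nat (b - a + 1)))).

(** Convolution of f supported on [a, +oo) and g supported on [b, +oo):
    (f * g)(n) = sum_k f(k) g(n-k); only k in [a, n-b] contribute. *)
Definition conv (a b : Z) (f g : Z -> R) (n : Z) : R :=
  Zsum a (n - b)%Z (fun k => f k * g (n - k)%Z).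

(** L-fold convolution power p^{*L} of a distribution p supported on [m, +oo);
    p^{*L} is supported on [L m, +oo).  p^{*0} is the Dirac mass at 0. *)
Fixpoint convpow (m : Z) (p : Z -> R) (L : nat) : Z -> R :=
  match L with
  | O => fun n => if Z.eqb n 0 then 1 else 0
  | S L' => conv (Z.of_nat L' * m)%Z m (convpow m p L') p
  end.

(* Main.v *)
Require Import Defs.
From Stdlib Require Import Reals ZArith List Lia Lra Arith Classical FunctionalExtensionality.
Open Scope R_scope.

Definition G (n : nat) (g : nat -> R) := fold_right Rplus 0 (map g (seq 0 n)).

Lemma fr_init x l : fold_right Rplus x l = fold_right Rplus 0 l + x.
Proof. induction l; simpl; [lra| rewrite IHl; lra]. Qed.

Lemma G_Sr n g : G (S n) g = G n g + g n.
Proof. unfold G. rewrite seq_S, map_app, fold_right_app. simpl. rewrite fr_init. lra. Qed.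

Lemma G_ext n g h : (forall j, (j < n)%nat -> g j = h j) -> G n g = G n h.
Proof. induction n; intros H; [reflexivity|]. rewrite !G_Sr, IHn, H; auto. Qed.

Lemma Zsum_G a b f : Zsum a b f = G (Z.to_nat (b - a + 1)) (fun j => f (a + Z.of_nat j)%Z).
Proof. reflexivity. Qed.

Lemma Zsum_empty a b f : (b < a)%Z -> Zsum a b f = 0.
Proof. intros H. rewrite Zsum_G. replace (Z.to_nat (b - a + 1)) with 0%nat by lia. reflexivity. Qed.

Lemma Zsum_r a b f : (a <= b + 1)%Z -> Zsum a (b + 1) f = Zsum a b f + f (b + 1)%Z.
Proof.
  intros H. rewrite !Zsum_G. replace (Z.to_nat (b + 1 - a + 1)) with (S (Z.to_nat (b - a + 1))) by lia.
  rewrite G_Sr. f_equal. f_equal. lia.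
Qed.

Lemma Zsum_ext a b f g : (forall n, (a <= n <= b)%Z -> f n = g n) -> Zsum a b f = Zsum a b g.
Proof. intros H. rewrite !Zsum_G. apply G_ext. intros j Hj. apply H. lia. Qed.

Lemma Zind_from (a : Z) (P : Z -> Prop) : P (a - 1)%Z -> (forall n, (a - 1 <= n)%Z -> P n -> P (n + 1)%Z) ->
  forall n, (a - 1 <= n)%Z -> P n.
Proof.
  intros H0 HS n Hn. replace n with (a - 1 + Z.of_nat (Z.to_nat (n - (a-1))))%Z by lia.
  induction (Z.to_nat (n - (a - 1))) as [|k IH].
  - replace (a - 1 + Z.of_nat 0)%Z with (a-1)%Z by lia. exact H0.
  - replace (a - 1 + Z.of_nat (S k))%Z with (a - 1 + Z.of_nat k + 1)%Z by lia. apply HS; [lia|exact IH].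
Qed.

Lemma Zsum_plus a b f g : Zsum a b (fun n => f n + g n) = Zsum a b f + Zsum a b g.
Proof.
  destruct (Z_lt_le_dec b a) as [H|H]. { rewrite !Zsum_empty; auto; lra. }
  enough (E : forall b', (a - 1 <= b')%Z -> Zsum a b' (fun n => f n + g n) = Zsum a b' f + Zsum a b' g) by (apply E; lia).
  apply (Zind_from a (fun b => Zsum a b (fun n => f n + g n) = Zsum a b f + Zsum a b g)).
  - rewrite !Zsum_empty by lia. lra.
  - intros n Hn IH. rewrite !Zsum_r by lia. rewrite IH. lra.
Qed.

Lemma Zsum_scal a b c f : Zsum a b (fun n => c * f n) = c * Zsum a b f.
Proof.
  destruct (Z_lt_le_dec b a) as [H|H]. { rewrite !Zsum_empty; auto; lra. }
  enough (E : forall b', (a - 1 <= b')%Z -> Zsum a b' (fun n => c * f n) = c * Zsum a b' f) by (apply E; lia).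
  apply (Zind_from a (fun b => Zsum a b (fun n => c * f n) = c * Zsum a b f)).
  - rewrite !Zsum_empty by lia. lra.
  - intros n Hn IH. rewrite !Zsum_r by lia. rewrite IH. lra.
Qed.

Lemma Zsum_le a b f g : (forall n, (a <= n <= b)%Z -> f n <= g n) -> Zsum a b f <= Zsum a b g.
Proof.
  intros Hfg. destruct (Z_lt_le_dec b a) as [H|H]. { rewrite !Zsum_empty; auto; lra. }
  assert (forall b', (a - 1 <= b')%Z -> (b' <= b)%Z -> Zsum a b' f <= Zsum a b' g); [|apply H0; lia].
  apply (Zind_from a (fun b' => (b' <= b)%Z -> Zsum a b' f <= Zsum a b' g)).
  - intros _. rewrite !Zsum_empty by lia. lra.
  - intros n Hn IH Hb. rewrite !Zsum_r by lia. specialize (IH ltac:(lia)). specialize (Hfg (n+1)%Z ltac:(lia)). lra.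
Qed.

Lemma Zsum_nonneg a b f : (forall n, 0 <= f n) -> 0 <= Zsum a b f.
Proof.
  intros Hf. replace 0 with (Zsum a b (fun _ => 0)).
  - apply Zsum_le. intros; apply Hf.
  - transitivity (Zsum a b (fun n => 0 * f n)).
    + apply Zsum_ext. intros; ring.
    + rewrite Zsum_scal. ring.
Qed.

Lemma Zsum_split a c b f : (a <= c <= b + 1)%Z -> Zsum a b f = Zsum a (c - 1) f + Zsum c b f.
Proof.
  intros H. assert (Hb : (c - 1 <= b)%Z) by lia. destruct H as [H1 H2]. clear H2. revert b Hb.
  apply (Zind_from c (fun b => Zsum a b f = Zsum a (c - 1) f + Zsum c b f)).
  - rewrite (Zsum_empty c) by lia. lra.
  - intros n Hn IH. rewrite !Zsum_r by lia. rewrite IH. lra.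
Qed.

Lemma Zsum_single x f : Zsum x x f = f x.
Proof. replace x with (x - 1 + 1)%Z at 2 by lia. rewrite Zsum_r by lia. rewrite Zsum_empty by lia.
  replace (x - 1 + 1)%Z with x by lia. lra. Qed.

Lemma Zsum_mono_range a b a' b' f : (forall n, 0 <= f n) -> (a' <= a)%Z -> (b <= b')%Z ->
  Zsum a b f <= Zsum a' b' f.
Proof.
  intros Hf H1 H2. destruct (Z_lt_le_dec b a) as [H|H].
  { rewrite Zsum_empty by lia. apply Zsum_nonneg; auto. }
  rewrite (Zsum_split a' a b') by lia. rewrite (Zsum_split a (b+1) b') by lia.
  replace (b + 1 - 1)%Z with b by lia.
  pose proof (Zsum_nonneg a' (a-1) f Hf). pose proof (Zsum_nonneg (b+1) b' f Hf). lra.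
Qed.

Lemma Zsum_ge_term a b x f : (forall n, 0 <= f n) -> (a <= x <= b)%Z -> f x <= Zsum a b f.
Proof. intros Hf H. rewrite <- Zsum_single. apply Zsum_mono_range; auto; lia. Qed.

Lemma Zsum_shift a b f : Zsum a b (fun n => f (n + 1)%Z) = Zsum (a + 1) (b + 1) f.
Proof.
  rewrite !Zsum_G. replace (b + 1 - (a + 1) + 1)%Z with (b - a + 1)%Z by lia.
  apply G_ext. intros j _. f_equal. lia.
Qed.

Lemma Zsum_sym K f : Zsum (- Z.of_nat K - 1) (Z.of_nat K) f =
  sum_f_R0 (fun k => f (Z.of_nat k)) K + sum_f_R0 (fun k => f (- Z.of_nat k - 1)%Z) K.
Proof.
  induction K.
  - simpl. rewrite (Zsum_split (-1)%Z 0%Z 0%Z) by lia. replace (0-1)%Z with (-1)%Z by lia.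
    rewrite !Zsum_single. simpl. lra.
  - rewrite !tech5. rewrite Nat2Z.inj_succ.
    rewrite (Zsum_split (- Z.succ (Z.of_nat K) - 1) (- Z.of_nat K - 1) (Z.succ (Z.of_nat K))) by lia.
    replace (- Z.succ (Z.of_nat K) - 1)%Z with (- Z.of_nat K - 1 - 1)%Z by lia.
    rewrite Zsum_single. unfold Z.succ. rewrite Zsum_r by lia. rewrite IHK.
    replace (- Z.of_nat K - 1 - 1)%Z with (- Z.of_nat (S K) - 1)%Z by lia.
    replace (Z.of_nat K + 1)%Z with (Z.of_nat (S K)) by lia. lra.
Qed.

Lemma cv_le (u : nat -> R) l B : Un_cv u l -> (forall n, u n <= B) -> l <= B.
Proof.
  intros Hu HB. destruct (Rle_dec l B) as [|Hn]; auto. exfalso.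
  destruct (Hu (l - B)) as [N HN]; [lra|]. specialize (HN N (le_n _)). specialize (HB N).
  unfold Rdist in HN. apply Rabs_def2 in HN. lra.
Qed.

Lemma Zseries_bound f B : (forall n, 0 <= f n) ->
  (forall K, Zsum (- Z.of_nat K - 1) (Z.of_nat K) f <= B) -> exists S, Zseries f S /\ S <= B.
Proof.
  intros Hf HB.
  set (u := fun K => sum_f_R0 (fun k => f (Z.of_nat k)) K).
  set (v := fun K => sum_f_R0 (fun k => f (- Z.of_nat k - 1)%Z) K).
  assert (Hu0 : forall K, 0 <= u K) by (intros; apply cond_pos_sum; auto).
  assert (Hv0 : forall K, 0 <= v K) by (intros; apply cond_pos_sum; auto).
  assert (Huv : forall K, u K + v K <= B) by (intros K; unfold u, v; rewrite <- Zsum_sym; auto).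
  assert (Hgu : Un_growing u) by (intro n; unfold u; rewrite tech5; specialize (Hf (Z.of_nat (S n))); lra).
  assert (Hgv : Un_growing v) by (intro n; unfold v; rewrite tech5; specialize (Hf (- Z.of_nat (S n) - 1)%Z); lra).
  destruct (growing_cv u Hgu) as [S1 H1].
  { exists B. intros x [i ->]. specialize (Huv i). specialize (Hv0 i). lra. }
  destruct (growing_cv v Hgv) as [S2 H2].
  { exists B. intros x [i ->]. specialize (Huv i). specialize (Hu0 i). lra. }
  exists (S1 + S2). split.
  - exists S1, S2. split; [exact H1|]. split; [exact H2|reflexivity].
  - apply (cv_le (fun i => u i + v i)); auto. apply CV_plus; auto.
Qed.

Lemma sum_le_lim (g : nat -> R) SS : (forall n, 0 <= g n) -> infinite_sum g SS -> forall K, sum_f_R0 g K <= SS.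
Proof.
  intros Hg HS K. apply (growing_ineq (sum_f_R0 g)); auto.
  intro n. rewrite tech5. specialize (Hg (S n)). lra.
Qed.

Lemma Zseries_partial f S : (forall n, 0 <= f n) -> Zseries f S -> forall a b, Zsum a b f <= S.
Proof.
  intros Hf [S1 [S2 [H1 [H2 ->]]]] a b.
  set (K := Z.to_nat (Z.abs a + Z.abs b)).
  apply Rle_trans with (Zsum (- Z.of_nat K - 1) (Z.of_nat K) f).
  - apply Zsum_mono_range; auto; lia.
  - rewrite Zsum_sym. pose proof (sum_le_lim _ _ (fun k => Hf _) H1 K).
    pose proof (sum_le_lim _ _ (fun k => Hf _) H2 K). lra.
Qed.

Lemma sum_zero (g : nat -> R) K : (forall n, g n = 0) -> sum_f_R0 g K = 0.
Proof. intros H. induction K; simpl; rewrite ?IHK, H; lra. Qed.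

Lemma Zseries_pos f S : S <> 0 -> Zseries f S -> exists a, f a <> 0.
Proof.
  intros HS [S1 [S2 [H1 [H2 ->]]]]. apply NNPP. intro Hn.
  assert (Hz : forall a, f a = 0) by (intro a; apply NNPP; intro; apply Hn; exists a; auto).
  destruct (H1 (Rabs (S1 + S2) / 2)) as [N1 HN1]. { pose proof (Rabs_pos_lt _ HS). lra. }
  destruct (H2 (Rabs (S1 + S2) / 2)) as [N2 HN2]. { pose proof (Rabs_pos_lt _ HS). lra. }
  specialize (HN1 N1 (le_n _)). specialize (HN2 N2 (le_n _)).
  rewrite sum_zero in HN1, HN2 by auto. unfold Rdist in *.
  assert (Rabs (S1 + S2) <= Rabs S1 + Rabs S2) by apply Rabs_triang.
  rewrite Rminus_0_l, Rabs_Ropp in HN1, HN2. lra.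
Qed.

Lemma infsum_scal g S c : infinite_sum g S -> infinite_sum (fun n => c * g n) (c * S).
Proof.
  intros H.
  assert (E : (fun n => sum_f_R0 (fun k => c * g k) n) = (fun n => c * sum_f_R0 g n)).
  { apply functional_extensionality. intro n. rewrite scal_sum. apply sum_eq. intros; ring. }
  change (Un_cv (fun n => sum_f_R0 (fun k => c * g k) n) (c * S)). rewrite E.
  apply (CV_mult (fun _ => c)); [|exact H].
  intros eps He. exists 0%nat. intros. unfold Rdist. rewrite Rminus_diag, Rabs_R0. lra.
Qed.

Lemma Zseries_scal f S c : Zseries f S -> Zseries (fun n => c * f n) (c * S).
Proof.
  intros [S1 [S2 [H1 [H2 ->]]]]. exists (c * S1), (c * S2). split; [|split].
  - apply (infsum_scal _ _ c H1).
  - apply (infsum_scal _ _ c H2).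
  - ring.
Qed.

Lemma convpow_S m p L n : convpow m p (S L) n =
  Zsum (Z.of_nat L * m) (n - m) (fun k => convpow m p L k * p (n - k)%Z).
Proof. reflexivity. Qed.

Lemma convpow_nonneg m p : (forall n, 0 <= p n) -> forall L n, 0 <= convpow m p L n.
Proof.
  intros Hp L. induction L; intros n.
  - simpl. destruct (Z.eqb n 0); lra.
  - rewrite convpow_S. apply Zsum_nonneg. intros k. apply Rmult_le_pos; auto.
Qed.

Lemma Zsum_zero a b f : (forall n, (a <= n <= b)%Z -> f n = 0) -> Zsum a b f = 0.
Proof.
  intros H. transitivity (Zsum a b (fun n => 0 * f n)).
  - apply Zsum_ext. intros n Hn. rewrite H; auto; ring.
  - rewrite Zsum_scal. ring.
Qed.

Lemma conv_identity m p L a : (a <= Z.of_nat (S L) * m)%Z -> forall N, (a - 1 <= N)%Z ->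
  Zsum a N (convpow m p (S L)) =
  Zsum (Z.of_nat L * m) (N - m) (fun k => convpow m p L k * Zsum m (N - k) p).
Proof.
  intros Ha. apply (Zind_from a (fun N => Zsum a N (convpow m p (S L)) =
    Zsum (Z.of_nat L * m) (N - m) (fun k => convpow m p L k * Zsum m (N - k) p))).
  - rewrite !Zsum_empty; auto; lia.
  - intros N HN IH. rewrite Zsum_r by lia. rewrite IH, convpow_S.
    destruct (Z_lt_le_dec (N + 1 - m) (Z.of_nat L * m)) as [Hl|Hl].
    + rewrite !Zsum_empty by lia. lra.
    + set (F := fun k => convpow m p L k * Zsum m (N + 1 - k) p).
      transitivity (Zsum (Z.of_nat L * m) (N - m) F + F (N - m + 1)%Z).
      2:{ rewrite <- Zsum_r by lia. f_equal. lia. }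
      unfold F at 2. replace (N + 1 - (N - m + 1))%Z with m by lia. rewrite Zsum_single.
      replace (N - m + 1)%Z with (N + 1 - m)%Z by lia. replace (N + 1 - (N + 1 - m))%Z with m by lia.
      rewrite (Zsum_split (Z.of_nat L * m) (N + 1 - m) (N + 1 - m) (fun k => convpow m p L k * p (N + 1 - k)%Z)) by lia.
      rewrite Zsum_single. replace (N + 1 - m - 1)%Z with (N - m)%Z by lia.
      replace (N + 1 - (N + 1 - m))%Z with m by lia.
      rewrite <- Rplus_assoc. f_equal. rewrite <- Zsum_plus. unfold F.
      apply Zsum_ext. intros k Hk.
      replace (N + 1 - k)%Z with (N - k + 1)%Z by lia. rewrite Zsum_r by lia. ring.
Qed.

Lemma convpow_mass m p : (forall n, 0 <= p n) -> (forall a b, Zsum a b p <= 1) ->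
  forall L a b, Zsum a b (convpow m p L) <= 1.
Proof.
  intros Hp Hp1 L. induction L; intros a b.
  - apply Rle_trans with (Zsum (Z.min a 0) (Z.max b 0) (convpow m p 0)).
    { apply Zsum_mono_range; [apply convpow_nonneg; auto| lia | lia]. }
    rewrite (Zsum_split _ 0%Z) by lia. rewrite (Zsum_split 0%Z 1%Z) by lia.
    replace (1 - 1)%Z with 0%Z by lia. rewrite Zsum_single.
    rewrite !Zsum_zero. { simpl. lra. }
    + intros n Hn. simpl. destruct (Z.eqb_spec n 0); [lia|reflexivity].
    + intros n Hn. simpl. destruct (Z.eqb_spec n 0); [lia|reflexivity].
  - destruct (Z_lt_le_dec b a) as [H|H]. { rewrite Zsum_empty; auto; lra. }
    apply Rle_trans with (Zsum (Z.min a (Z.of_nat (S L) * m)) b (convpow m p (S L))).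
    { apply Zsum_mono_range; [apply convpow_nonneg; auto| lia | lia]. }
    rewrite conv_identity by lia.
    apply Rle_trans with (Zsum (Z.of_nat L * m) (b - m) (fun k => convpow m p L k * 1)).
    + apply Zsum_le. intros k _. apply Rmult_le_compat_l; [apply convpow_nonneg; auto| apply Hp1].
    + rewrite (Zsum_ext _ _ _ (convpow m p L)) by (intros; ring). apply IHL.
Qed.

Lemma IZR_nat_split (k : Z) : exists j : nat, IZR k = INR j \/ IZR k = - INR j.
Proof.
  exists (Z.to_nat (Z.abs k)). rewrite INR_IZR_INZ, Z2Nat.id by lia.
  destruct (Z_le_dec 0 k).
  - left. f_equal. lia.
  - right. rewrite <- opp_IZR. f_equal. lia.
Qed.

Lemma cos_periodZ x k : cos (x + 2 * IZR k * PI) = cos x.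
Proof.
  destruct (IZR_nat_split k) as [j [H|H]]; rewrite H.
  - apply cos_period.
  - rewrite <- (cos_period (x + 2 * - INR j * PI) j). f_equal. ring.
Qed.

Lemma sin_periodZ x k : sin (x + 2 * IZR k * PI) = sin x.
Proof.
  destruct (IZR_nat_split k) as [j [H|H]]; rewrite H.
  - apply sin_period.
  - rewrite <- (sin_period (x + 2 * - INR j * PI) j). f_equal. ring.
Qed.

Lemma periodic_contra (p : Z -> R) (tau : R) (g a : Z)
  (Htau : 0 < tau)
  (Hnonneg : forall n : Z, 0 <= p n)
  (Hnorm : Zseries p 1)
  (Hperiod : forall t : R, 0 < t < tau ->
     forall re im : R,
       Zseries (fun n => p n * cos (2 * PI * IZR n * t / tau)) re ->
       Zseries (fun n => - (p n * sin (2 * PI * IZR n * t / tau))) im ->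
       re ^ 2 + im ^ 2 <> 1)
  (Hg : (2 <= g)%Z) (Hdiv : forall s, 0 < p s -> (g | s - a)%Z) : False.
Proof.
  assert (Hg' : 2 <= IZR g) by (apply IZR_le; auto).
  set (t := tau / IZR g). set (th := 2 * PI * IZR a / IZR g).
  assert (Ht : 0 < t < tau).
  { assert (IZR g * t = tau) by (unfold t; field; lra). split; nra. }
  assert (Hcomm : forall n, 0 < p n -> exists k, 2 * PI * IZR n * t / tau = th + 2 * IZR k * PI).
  { intros n Hn. destruct (Hdiv n Hn) as [k Hk]. exists k.
    replace n with (a + k * g)%Z by lia. rewrite plus_IZR, mult_IZR. unfold t, th. field. lra. }
  apply (Hperiod t Ht (cos th * 1) (- sin th * 1)).
  - replace (fun n => p n * cos (2 * PI * IZR n * t / tau)) with (fun n => cos th * p n).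
    + apply Zseries_scal; auto.
    + apply functional_extensionality. intros n. destruct (Hnonneg n) as [Hp|Hp].
      * destruct (Hcomm n Hp) as [k ->]. rewrite cos_periodZ. ring.
      * rewrite <- Hp. ring.
  - replace (fun n => - (p n * sin (2 * PI * IZR n * t / tau))) with (fun n => - sin th * p n).
    + apply Zseries_scal; auto.
    + apply functional_extensionality. intros n. destruct (Hnonneg n) as [Hp|Hp].
      * destruct (Hcomm n Hp) as [k ->]. rewrite sin_periodZ. ring.
      * rewrite <- Hp. ring.
  - pose proof (sin2_cos2 th). unfold Rsqr in H. nra.
Qed.

Inductive sums (p : Z -> R) : nat -> Z -> Prop :=
| sums0 : sums p 0 0
| sumsS L x y : sums p L x -> 0 < p y -> sums p (S L) (x + y).

Lemma sums_add p M y : sums p M y -> forall L x, sums p L x -> sums p (L + M) (x + y).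
Proof.
  induction 1; intros L' x' H'.
  - rewrite Nat.add_0_r, Z.add_0_r. auto.
  - rewrite Nat.add_succ_r, Z.add_assoc. constructor; auto.
Qed.

Lemma sums_pos m p (Hnonneg : forall n, 0 <= p n) (Hbelow : forall n : Z, (n < m)%Z -> p n = 0) L x :
  sums p L x -> (Z.of_nat L * m <= x)%Z /\ 0 < convpow m p L x.
Proof.
  induction 1 as [|L x y Hs [IH1 IH2] Hy].
  - split; [lia|]. simpl. lra.
  - assert (m <= y)%Z. { destruct (Z_lt_le_dec y m); auto. rewrite Hbelow in Hy; auto; lra. }
    split; [nia|]. rewrite convpow_S.
    apply Rlt_le_trans with (convpow m p L x * p (x + y - x)%Z).
    + replace (x + y - x)%Z with y by lia. apply Rmult_lt_0_compat; auto.
    + apply (Zsum_ge_term _ _ x (fun k => convpow m p L k * p (x + y - k)%Z)).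
      * intros; apply Rmult_le_pos; auto. apply convpow_nonneg; auto.
      * lia.
Qed.

Definition Gs p (d : Z) := exists L x, sums p L x /\ sums p L (x + d).

Lemma Gs_add p d e : Gs p d -> Gs p e -> Gs p (d + e).
Proof.
  intros [L [x [H1 H2]]] [M [y [H3 H4]]]. exists (L + M)%nat, (x + y)%Z. split.
  - apply sums_add; auto.
  - replace (x + y + (d + e))%Z with (x + d + (y + e))%Z by ring. apply sums_add; auto.
Qed.

Lemma Gs_opp p d : Gs p d -> Gs p (- d).
Proof.
  intros [L [x [H1 H2]]]. exists L, (x + d)%Z. split; auto. replace (x + d + - d)%Z with x by ring. auto.
Qed.

Lemma Gs_0 p : Gs p 0.
Proof. exists 0%nat, 0%Z. split; constructor. Qed.

Lemma Gs_mul p d z : Gs p d -> Gs p (z * d).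
Proof.
  intros Hd.
  assert (Hn : forall k : nat, Gs p (Z.of_nat k * d)).
  { induction k. - apply Gs_0. - replace (Z.of_nat (S k) * d)%Z with (Z.of_nat k * d + d)%Z by lia. apply Gs_add; auto. }
  destruct (Z_le_dec 0 z).
  - replace z with (Z.of_nat (Z.to_nat z)) by lia. auto.
  - replace (z * d)%Z with (- (Z.of_nat (Z.to_nat (- z)) * d))%Z by lia. apply Gs_opp; auto.
Qed.

Lemma abs_min u v : Rabs (u - v) = u + v + -2 * Rmin u v.
Proof. unfold Rmin. destruct (Rle_dec u v); [rewrite Rabs_left1 | rewrite Rabs_right]; lra. Qed.

Theorem mainTheorem7 (p : Z -> R) (tau : R) (m : Z)
  (Htau : 0 < tau)
  (Hnonneg : forall n : Z, 0 <= p n)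
  (Hnorm : Zseries p 1)
  (Hbelow : forall n : Z, (n < m)%Z -> p n = 0)
  (Hperiod : forall t : R, 0 < t < tau ->
     forall re im : R,
       Zseries (fun n => p n * cos (2 * PI * IZR n * t / tau)) re ->
       Zseries (fun n => - (p n * sin (2 * PI * IZR n * t / tau))) im ->
       re ^ 2 + im ^ 2 <> 1) :
  exists L : nat, (1 <= L)%nat /\
    exists S : R,
      Zseries (fun n => Rabs (convpow m p L n - convpow m p L (n + 1)%Z)) S /\
      S / 2 < 1.
Proof.
  pose proof (Zseries_partial p 1 Hnonneg Hnorm) as Hp1.
  destruct (Zseries_pos p 1 R1_neq_R0 Hnorm) as [a Ha].
  assert (Ha' : 0 < p a) by (destruct (Hnonneg a); auto; congruence).
  assert (Hsupp : forall s, 0 < p s -> Gs p (s - a)).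
  { intros s Hs. exists 1%nat, a. split.
    - replace a with (0 + a)%Z by ring. econstructor; [constructor|auto].
    - replace (a + (s - a))%Z with (0 + s)%Z by ring. econstructor; [constructor|auto]. }
  assert (H1 : Gs p 1).
  { destruct (classic (exists d, Gs p d /\ (0 < d)%Z)) as [Hex|Hno].
    - set (P := fun n : nat => Gs p (Z.of_nat (S n))).
      destruct (dec_inh_nat_subset_has_unique_least_element P (fun n => classic (P n))) as [n0 [[Hn0 Hmin] _]].
      { destruct Hex as [d [Hd Hd0]]. exists (Z.to_nat d - 1)%nat. unfold P.
        replace (Z.of_nat (S (Z.to_nat d - 1))) with d by lia. auto. }
      set (g := Z.of_nat (S n0)).
      assert (Hdiv : forall d, Gs p d -> (g | d)%Z).
      { intros d Hd. apply Z.mod_divide; [lia|].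
        assert (Hr : Gs p (d mod g)).
        { rewrite Z.mod_eq by lia. replace (d - g * (d / g))%Z with (d + (- (d / g)) * g)%Z by ring.
          apply Gs_add; auto. apply Gs_mul. exact Hn0. }
        pose proof (Z.mod_pos_bound d g ltac:(lia)).
        destruct (Z.eq_dec (d mod g) 0); auto. exfalso.
        assert (P (Z.to_nat (d mod g)%Z - 1)%nat).
        { unfold P. replace (Z.of_nat (S (Z.to_nat (d mod g)%Z - 1))) with (d mod g)%Z by lia. auto. }
        specialize (Hmin _ H0). unfold g in *. lia. }
      destruct (Z.eq_dec g 1) as [E|E].
      + rewrite <- E. exact Hn0.
      + exfalso. apply (periodic_contra p tau g a Htau Hnonneg Hnorm Hperiod); [unfold g in *; lia|].
        intros s Hs. apply Hdiv, Hsupp, Hs.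
    - exfalso. apply (periodic_contra p tau 2 a Htau Hnonneg Hnorm Hperiod); [lia|].
      intros s Hs. replace (s - a)%Z with 0%Z. { apply Z.divide_0_r. }
      destruct (Z.lt_trichotomy (s - a) 0) as [Hl|[Hl|Hl]]; auto.
      + exfalso. apply Hno. exists (- (s - a))%Z. split; [apply Gs_opp, Hsupp; auto|lia].
      + exfalso. apply Hno. exists (s - a)%Z. split; [apply Hsupp; auto|lia]. }
  destruct H1 as [L [x [Hx1 Hx2]]].
  destruct L as [|L'].
  { inversion Hx1; subst. inversion Hx2. }
  exists (S L'). split; [lia|].
  set (q := convpow m p (S L')).
  destruct (sums_pos m p Hnonneg Hbelow _ _ Hx1) as [_ Hq1].
  destruct (sums_pos m p Hnonneg Hbelow _ _ Hx2) as [_ Hq2].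
  fold q in Hq1, Hq2.
  assert (Hq0 : forall n, 0 <= q n) by (intros; apply convpow_nonneg; auto).
  assert (Hqm : forall a b, Zsum a b q <= 1) by (intros; apply convpow_mass; auto).
  set (c := Rmin (q x) (q (x + 1)%Z)).
  assert (Hc : 0 < c) by (unfold c, Rmin; destruct Rle_dec; lra).
  assert (Hmin0 : forall n, 0 <= Rmin (q n) (q (n + 1)%Z)).
  { intros n. unfold Rmin. destruct Rle_dec; auto. }
  destruct (Zseries_bound (fun n => Rabs (q n - q (n + 1)%Z)) (2 - 2 * c)) as [S [HS HSle]].
  - intros; apply Rabs_pos.
  - intros K.
    apply Rle_trans with (Zsum (Z.min (- Z.of_nat K - 1) x) (Z.max (Z.of_nat K) x) (fun n => Rabs (q n - q (n + 1)%Z))).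
    { apply Zsum_mono_range; [intros; apply Rabs_pos|lia|lia]. }
    set (a' := Z.min (- Z.of_nat K - 1) x). set (b' := Z.max (Z.of_nat K) x).
    rewrite (Zsum_ext _ _ _ (fun n => (q n + q (n + 1)%Z) + -2 * Rmin (q n) (q (n + 1)%Z)))
      by (intros; apply abs_min).
    rewrite !Zsum_plus, Zsum_scal, Zsum_shift.
    pose proof (Hqm a' b'). pose proof (Hqm (a' + 1)%Z (b' + 1)%Z).
    pose proof (Zsum_ge_term a' b' x (fun n => Rmin (q n) (q (n + 1)%Z)) Hmin0 ltac:(unfold a', b'; lia)).
    cbv beta in H1. fold c in H1. lra.
  - exists S. split; [exact HS| lra].
Qed.
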